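(* Assume Markov induction. Let $\chi:A\to\nabla_0B$ be an oracle, $P:\mathbb{N}\to\mathcal{U}$ a family of types, and $f:\prod_{n:\mathbb{N}}\bigcirc_\chi(P(n)+\neg P(n))$. Then $\neg\neg\,\bigcirc_\chi\left(\sum_{n:\mathbb{N}}P(n)\right)\to\bigcirc_\chi\left(\sum_{n:\mathbb{N}}P(n)\right)$.
   Context: Setting: homotopy type theory with a univalent universe $\mathcal{U}$ of small types and higher inductive types. It is assumed that there is a small type $\Omega_{\neg\neg}:\mathcal{U}$ classifying $\neg\neg$-stable propositions. For a type $X$, $\nabla_0X$ is the type of $\xi:X\to\Omega_{\neg\neg}$ such that $\neg\neg\sum_{x:X}\xi(x)$ and $\prod_{x,y:X}\xi(x)\to\xi(y)\to\neg\neg(x=y)$; write $\xi\downarrow:=\sum_{x:X}\xi(x)$ and $\xi\downarrow=x$ for $\xi(x)$. The nullification at a family $B:A\to\mathcal{U}$ is the higher modality whose modal types are exactly the $X$ with every constant map $X\to X^{B(a)}$ an equivalence. An oracle is a map $\chi:A\to\nabla_0B$; the oracle modality $\bigcirc_\chi$ is the nullification at $a\mapsto\chi(a)\downarrow$. Markov induction (MI): write $\mathtt{IsSuc}(\mu,\nu):=\prod_{m:\mathbb{N}}(\mu\downarrow=m)\to(\nu\downarrow=m+1)$ for $\mu,\nu:\nabla_0\mathbb{N}$; MI asserts that for every $P:\nabla_0\mathbb{N}\to\mathcal{U}$ and every $h:\prod_{\nu:\nabla_0\mathbb{N}}\left(\prod_{\mu:\nabla_0\mathbb{N}}\mathtt{IsSuc}(\mu,\nu)\to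 P(\mu)\right)\to P(\nu)$ there is a section $\prod_{\nu:\nabla_0\mathbb{N}}P(\nu)$. *)

(* Defs.v *)
Definition isEquiv {X Y : Type} (f : X -> Y) : Type :=
  ({g : Y -> X & forall y, f (g y) = y} * {h : Y -> X & forall x, h (f x) = x})%type.

Definition OmegaNN : Type := {P : Prop | ~ ~ P -> P}.

Definition holds (p : OmegaNN) : Prop := proj1_sig p.

Definition nabla0 (X : Type) : Type :=
  {xi : X -> OmegaNN &
     ((({x : X & holds (xi x)} -> False) -> False) *
      (forall x y : X, holds (xi x) -> holds (xi y) -> ~ ~ (x = y)))%type}.

Definition downEq {X : Type} (xi : nabla0 X) (x : X) : Prop :=
  holds (projT1 xi x).

Definition down {X : Type} (xi : nabla0 X) : Type :=
  {x : X & downEq xi x}.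

Definition isNull {A : Type} (B : A -> Type) (X : Type) : Type :=
  forall a : A, isEquiv (fun (x : X) (_ : B a) => x).

(* Any structure satisfying these rules is
   equivalent to the HIT nullification, so quantifying over all of them
   is the same as speaking of "the" nullification. *)
Record Nullification {A : Type} (B : A -> Type) : Type := {
  nO : Type -> Type;
  nEta : forall X : Type, X -> nO X;
  nO_null : forall X : Type, isNull B (nO X);
  nInd : forall (X : Type) (Q : nO X -> Type),
           (forall z, isNull B (Q z)) ->
           (forall x : X, Q (nEta X x)) -> forall z : nO X, Q z;
  nInd_beta : forall (X : Type) (Q : nO X -> Type)
           (HQ : forall z, isNull B (Q z)) (g : forall x : X, Q (nEta X x))
           (x : X), nInd X Q HQ g (nEta X x) = g x
}.

Arguments nO {A B} _ _.
Arguments nEta {A B} _ {X} _.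

Definition OracleModality {A B : Type} (chi : A -> nabla0 B) : Type :=
  Nullification (fun a : A => down (chi a)).

Definition IsSuc (mu nu : nabla0 nat) : Prop :=
  forall m : nat, downEq mu m -> downEq nu (S m).

Definition MarkovInduction : Type :=
  forall (P : nabla0 nat -> Type),
    (forall nu : nabla0 nat,
        (forall mu : nabla0 nat, IsSuc mu nu -> P mu) -> P nu) ->
    forall nu : nabla0 nat, P nu.

(* Main.v *)
Require Import Defs.
From Stdlib Require Import Arith Lia Classical.

Section S.
Variable P : nat -> Type.

Definition Rk (k m : nat) : Prop :=
  ~ ~ (inhabited (P (k + m)) /\ forall j, j < m -> ~ inhabited (P (k + j))).

Lemma Rk_stab k m : ~ ~ Rk k m -> Rk k m.
Proof. unfold Rk; tauto. Qed.

Definition mkNu (k : nat) (H : ~ ~ exists m, Rk k m) : nabla0 nat.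
Proof.
  refine (existT _ (fun m => exist _ (Rk k m) (Rk_stab k m)) (_, _)).
  - intro h; apply H; intros [m r]; exact (h (existT _ m r)).
  - intros x y hx hy; simpl in *. unfold holds in *; simpl in *.
    intro c; apply hx; intros [Px Hx]; apply hy; intros [Py Hy].
    destruct (lt_eq_lt_dec x y) as [[l|e]|l].
    + exact (Hy x l Px).
    + exact (c e).
    + exact (Hx y l Py).
Defined.

Lemma least (n : nat) : inhabited (P n) ->
  exists m, inhabited (P m) /\ forall j, j < m -> ~ inhabited (P j).
Proof.
  induction n as [n IH] using lt_wf_ind. intro Hn.
  destruct (classic (exists j, j < n /\ inhabited (P j))) as [[j [lj Pj]]|no].
  - exact (IH j lj Pj).
  - exists n; split; [exact Hn|]. intros j lj Pj; apply no; eauto.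
Qed.
End S.

Lemma False_null {A B : Type} (chi : A -> nabla0 B) :
  isNull (fun a : A => down (chi a)) False.
Proof.
  intro a. split.
  - exists (fun h => fst (projT2 (chi a)) h). intro y.
    exfalso; exact (fst (projT2 (chi a)) y).
  - exists (fun h => fst (projT2 (chi a)) h). intro x; destruct x.
Qed.

Theorem mainTheorem10 (MI : MarkovInduction)
  (A B : Type) (chi : A -> nabla0 B) (O : OracleModality chi)
  (P : nat -> Type)
  (f : forall n : nat, nO O (P n + (P n -> False))%type) :
  ((nO O {n : nat & P n} -> False) -> False) -> nO O {n : nat & P n}.
Proof.
  intro HH.
  set (Q := fun nu : nabla0 nat => forall k, (forall m, downEq nu m <-> Rk P k m)
              -> nO O {n : nat & P n}).
  assert (step : forall nu, (forall mu, IsSuc mu nu -> Q mu) -> Q nu).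
  { intros nu IH k Hk.
    refine (nInd _ O _ (fun _ => nO O {n : nat & P n})
              (fun _ => nO_null _ O _) _ (f k)).
    intros [p|np].
    - exact (nEta O (existT _ k p)).
    - assert (H1 : ~ ~ exists m, Rk P (S k) m).
      { intro h. apply (fst (projT2 nu)). intros [m hm].
        apply (proj1 (Hk m)) in hm. apply hm. intros [Pi Hj].
        destruct m as [|m'].
        - rewrite Nat.add_0_r in Pi. destruct Pi as [p]; exact (np p).
        - apply h. exists m'. intro c; apply c; split.
          + replace (S k + m') with (k + S m') by lia. exact Pi.
          + intros j lj. replace (S k + j) with (k + S j) by lia.
            apply Hj; lia. }
      apply (IH (mkNu P (S k) H1) ) with (k := S k).
      + intros m hm. apply (proj2 (Hk (S m))). simpl in hm. unfold holds in hm; simpl in hm.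
        intro c; apply hm; intros [Pi Hj]; apply c; split.
        * replace (k + S m) with (S k + m) by lia. exact Pi.
        * intros j lj. destruct j as [|j'].
          -- rewrite Nat.add_0_r. intros [p]; exact (np p).
          -- replace (k + S j') with (S k + j') by lia. apply Hj; lia.
      + intro m; simpl; unfold downEq, holds; simpl; tauto. }
  assert (H0 : ~ ~ exists m, Rk P 0 m).
  { intro h. apply HH. intro z.
    refine (nInd _ O _ (fun _ => False) (fun _ => False_null chi) _ z).
    intros [n p]. destruct (least P n (inhabits p)) as [m [Pm Hm]].
    apply h. exists m. intro c; apply c; split; simpl; assumption. }
  apply (MI Q step (mkNu P 0 H0) 0).
  intro m; unfold downEq, holds; simpl; tauto.
Qed.
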